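(* Let $p$ be an odd prime, let $r,n\ge1$ be integers and let $a\in\mathbb{F}_{p^n}^*$. Then the function $f:\mathbb{F}_{p^n}\to\mathbb{F}_p$, $f(x)=\mathrm{Tr}_n(ax^{p^r+1})$, is not near-bent.
   Context: $\epsilon_p=e^{2\pi i/p}$, $\mathrm{Tr}_n$ is the absolute trace $\mathbb{F}_{p^n}\to\mathbb{F}_p$, $\widehat{f}(b)=\sum_{x\in\mathbb{F}_{p^n}}\epsilon_p^{f(x)-\mathrm{Tr}_n(bx)}$. A function $f:\mathbb{F}_{p^n}\to\mathbb{F}_p$ is near-bent if $|\widehat{f}(b)|^2\in\{0,p^{n+1}\}$ for all $b\in\mathbb{F}_{p^n}$. *)

(* Defs.v *)
From HB Require Import structures.
From mathcomp Require Import all_boot all_order all_algebra all_field.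
Set Implicit Arguments. Unset Strict Implicit. Unset Printing Implicit Defensive.
Import Order.TTheory GRing.Theory Num.Theory.
Local Open Scope ring_scope.

(* epsilon_p = e^{2 pi i / p}: p.-root (-1) is e^{i pi / p} (minimal argument),
   so its square is e^{2 pi i / p}. *)
Definition eps (p : nat) : algC := (p.-root (-1)) ^+ 2.

(* Absolute trace Tr_n : F_{p^n} -> F_p, as an element of F (it lies in the
   prime subfield). *)
Definition tr (F : finFieldType) (p n : nat) (x : F) : F :=
  \sum_(i < n) x ^+ (p ^ i).

(* The natural number k < p representing an element t of the prime subfield
   (t = k%:R); used as the exponent of eps. *)
Definition fp_val (F : finFieldType) (p : nat) (t : F) : nat :=
  odflt 0%N (omap (@nat_of_ord p) [pick k : 'I_p | (k : nat)%:R == t]).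

(* Walsh transform  hat f (b) = sum_x eps^{f(x) - Tr_n(b x)}, for f with
   values in the prime subfield F_p of F. *)
Definition walsh (F : finFieldType) (p n : nat) (f : F -> F) (b : F) : algC :=
  \sum_(x : F) eps p ^+ fp_val p (f x) * (eps p ^+ fp_val p (tr p n (b * x)))^-1.

Definition near_bent (F : finFieldType) (p n : nat) (f : F -> F) : Prop :=
  forall b : F, `|walsh p n f b| ^+ 2 = 0 \/ `|walsh p n f b| ^+ 2 = (p ^ n.+1)%:R.

(* Main.v *)
Require Import Defs.
From HB Require Import structures.
From mathcomp Require Import all_boot all_order all_algebra all_field.
Import Order.TTheory GRing.Theory Num.Theory.
Local Open Scope ring_scope.

Lemma eps_prim (p : nat) : prime p -> p.-primitive_root (eps p).
Proof.
move=> pr; have p_gt1 := prime_gt1 pr; have p_gt0 := ltnW p_gt1.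
pose rho := p.-root (-1 : algC).
have rhoK : rho ^+ p = -1 by rewrite /rho rootCK.
have ep1 : eps p ^+ p = 1 by rewrite /eps -exprM mulnC exprM rhoK sqrrN expr1n.
have [m pm mdvd] := prim_order_exists p_gt0 ep1.
have /orP[/eqP m1|/eqP mp] : (m == 1%N) || (m == p) by case/primeP: pr => _; apply.
  2: by rewrite mp in pm.
exfalso; subst m.
have e1 : eps p = 1 by have := prim_expr_order pm; rewrite expr1.
move: e1; rewrite /eps => /eqP; rewrite sqrf_eq1 => /orP[] /eqP r1.
  move: rhoK; rewrite /rho r1 expr1n => /eqP; rewrite -subr_eq0 opprK => /eqP h.
  by have := pnatr_eq0 algC 2; rewrite -h eqxx.
by have := rootC_lt0 (-1 : algC) p_gt1; rewrite r1 ltrN10.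
Qed.

Section FF.
Variables (p n : nat) (F : finFieldType).
Hypotheses (pr : prime p) (oddp : odd p) (n_gt0 : (0 < n)%N) (cardF : #|F| = (p ^ n)%N).

Let p_gt1 : (1 < p)%N := prime_gt1 pr.
Let p_gt0 : (0 < p)%N := ltnW p_gt1.
Let chF : p \in [pchar F] := card_finPcharP cardF pr.

Lemma frobD k (x y : F) : (x + y) ^+ (p ^ k) = x ^+ (p ^ k) + y ^+ (p ^ k).
Proof.
apply: exprDn_pchar; rewrite (eq_pnat _ (pcharf_eq chF)) pnatX pnat_id //.
Qed.

Lemma frob0 k : (0 : F) ^+ (p ^ k) = 0.
Proof. by rewrite expr0n expn_eq0 (negbTE (lt0n_neq0 p_gt0)). Qed.

Lemma frobN k (x : F) : (- x) ^+ (p ^ k) = - x ^+ (p ^ k).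
Proof. by apply/eqP; rewrite -subr_eq0 opprK -frobD addNr frob0. Qed.

Lemma frobnat j k : (k%:R : F) ^+ (p ^ j) = k%:R.
Proof.
elim: j => [|j IH]; first by rewrite expr1.
by rewrite expnS exprM -(pFrobenius_autE chF) pFrobenius_aut_nat IH.
Qed.

Lemma fermat (x : F) : x ^+ (p ^ n) = x.
Proof. by rewrite -cardF expf_card. Qed.

Lemma fermatk k (x : F) : x ^+ (p ^ (n * k)) = x.
Proof.
elim: k => [|k IH]; first by rewrite muln0 expr1.
by rewrite mulnS expnD exprM fermat IH.
Qed.

Lemma two_neq0 : (2%:R : F) != 0.
Proof.
rewrite -(dvdn_pcharf chF); apply/negP => /(dvdn_leq (isT : (0 < 2)%N)) h.
have p2 : p = 2%N by apply/eqP; rewrite eqn_leq h p_gt1.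
by move: oddp; rewrite p2.
Qed.

Lemma nat_inj (k l : nat) : (k < p)%N -> (l < p)%N -> (k%:R : F) = l%:R -> k = l.
Proof.
wlog kl : k l / (k <= l)%N.
  move=> W kp lp e; case: (leqP k l) => h; first exact: W.
  by apply/esym/W => //; apply: ltnW.
move=> kp lp e; apply/eqP; rewrite eqn_leq kl /=.
have : (p %| l - k)%N by rewrite (dvdn_pcharf chF) natrB // e subrr.
have [lk0|lk] := posnP (l - k)%N; first by rewrite -subn_eq0 lk0.
move/(dvdn_leq lk); rewrite leqNgt => /negP; case.
by apply: leq_ltn_trans lp; apply: leq_subr.
Qed.

Lemma natmod k : ((k %% p)%:R : F) = k%:R.
Proof.
rewrite {2}(divn_eq k p) natrD natrM.
by rewrite (pcharf0 chF) mulr0 add0r.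
Qed.

Lemma natI : injective (fun k : 'I_p => ((k : nat)%:R : F)).
Proof. by move=> k l /nat_inj e; apply/val_inj/e. Qed.

Lemma primeF (t : F) : t ^+ p = t -> exists k : 'I_p, t = (k : nat)%:R.
Proof.
move=> tp; case: (boolP [exists k : 'I_p, t == (k : nat)%:R]).
  by case/existsP => k /eqP ->; exists k.
rewrite negb_exists => /forallP nt; exfalso.
pose P : {poly F} := 'X^p - 'X.
have sP : size P = p.+1.
  by rewrite /P size_polyDl size_polyXn // size_polyN size_polyX ltnS.
have P0 : P != 0 by rewrite -size_poly_eq0 sP.
pose rs := t :: [seq (val k)%:R | k <- enum 'I_p].
suff : (size rs < size P)%N by rewrite /= size_map size_enum_ord sP ltnn.
apply: max_poly_roots P0 _ _.
  rewrite /= {1}/root /P !hornerE tp subrr eqxx /=.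
  apply/allP => x /mapP [k _ ->]; rewrite /root /P !hornerE.
  by have := frobnat 1 k; rewrite expn1 => ->; rewrite subrr.
rewrite /= map_inj_uniq ?enum_uniq ?andbT //; last exact: natI.
by apply/mapP => -[k _ e]; have := nt k; rewrite e eqxx.
Qed.

Lemma fp_val_nat k : fp_val p (k%:R : F) = (k %% p)%N.
Proof.
rewrite /fp_val; case: pickP => [k' /eqP e|none] /=.
  apply: nat_inj (ltn_ord k') _ _; first by rewrite ltn_mod.
  by rewrite natmod e.
by have := none (Ordinal (ltn_pmod k p_gt0)); rewrite /= natmod eqxx.
Qed.

Definition chi (t : F) : algC := eps p ^+ fp_val p t.

Let epsP : p.-primitive_root (eps p) := eps_prim p pr.

Lemma chi_nat k : chi k%:R = eps p ^+ k.
Proof. by rewrite /chi fp_val_nat prim_expr_mod. Qed.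

Definition inP (t : F) := t ^+ p = t.

Lemma chiD s t : inP s -> inP t -> chi (s + t) = chi s * chi t.
Proof.
move=> /primeF [k ->] /primeF [l ->].
by rewrite -natrD !chi_nat exprD.
Qed.

Lemma chi0 : chi 0 = 1.
Proof. by have := chi_nat 0; rewrite expr0. Qed.

Lemma chi_neq1 t : inP t -> t != 0 -> chi t != 1.
Proof.
move=> /primeF [k ->]; rewrite chi_nat -(prim_order_dvd epsP).
by rewrite (dvdn_pcharf chF).
Qed.

Lemma chi_neq0 t : chi t != 0.
Proof.
by rewrite /chi expf_neq0 // (prim_root_eq0 epsP) -lt0n p_gt0.
Qed.

Lemma chi_conj t : (chi t)^* = (chi t)^-1.
Proof.
have e1 : `|chi t| = 1.
  have h : `|chi t| ^+ p = 1.
    by rewrite -normrX /chi -exprM mulnC exprM (prim_expr_order epsP) expr1n normr1.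
  by apply/eqP; rewrite -(pexpr_eq1 p_gt0) ?normr_ge0 // h.
by rewrite invC_norm e1 expr1n invr1 mul1r.
Qed.

Notation tr := (@Defs.tr F p n).

Lemma trD x y : tr (x + y) = tr x + tr y.
Proof. by rewrite /Defs.tr -big_split; apply: eq_bigr => i _; rewrite frobD. Qed.

Lemma tr0 : tr 0 = 0.
Proof. by rewrite /Defs.tr big1 // => i _; rewrite frob0. Qed.

Lemma tr_frob x : tr (x ^+ p) = tr x.
Proof.
rewrite /Defs.tr; case: n n_gt0 cardF => // m _ cF.
rewrite big_ord_recr big_ord_recl /= -exprM -expnS -cF expf_card expn0 expr1 addrC.
by congr (_ + _); apply: eq_bigr => i _; rewrite -exprM -expnS.
Qed.

Lemma tr_frobk k x : tr (x ^+ (p ^ k)) = tr x.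
Proof.
elim: k => [|k IH]; first by rewrite expr1.
by rewrite expnSr exprM tr_frob IH.
Qed.

Lemma tr_inP x : inP (tr x).
Proof.
rewrite /inP /Defs.tr -(pFrobenius_autE chF) rmorph_sum /=.
rewrite -[RHS](tr_frob x) /Defs.tr; apply: eq_bigr => i _.
by rewrite pFrobenius_autE -!exprM mulnC.
Qed.

Lemma tr_nondeg : exists v, tr v != 0.
Proof.
case: (boolP [exists v, tr v != 0]); first by case/existsP => v; exists v.
rewrite negb_exists => /forallP /= h; exfalso.
pose T : {poly F} := \sum_(i < n) 'X^(p ^ i).
have T1 : T`_1 = 1.
  rewrite /T coef_sum; case: n n_gt0 => // m _.
  rewrite big_ord_recl /= expn0 coefXn eqxx big1 ?addr0 // => i _.
  rewrite coefXn; case: eqP => // h1; exfalso.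
  have : (p <= p ^ (bump 0 i))%N by rewrite -{1}(expn1 p) leq_pexp2l. 
  by rewrite -h1 leqNgt p_gt1.
have T0 : T != 0 by apply/eqP => T0; move: T1; rewrite T0 coef0 => /eqP; rewrite eq_sym oner_eq0.
have sT : (size T <= (p ^ n.-1).+1)%N.
  apply: leq_trans (size_sum _ _ _) _; apply/bigmax_leqP => i _.
  by rewrite size_polyXn ltnS leq_pexp2l // -ltnS prednK.
have := max_poly_roots T0 _ (enum_uniq F).
rewrite -cardE cardF => /(_ _) H.
have : (p ^ n < (p ^ n.-1).+1)%N.
  apply: leq_trans sT; apply: H; apply/allP => x _.
  by rewrite /root /T horner_sum; under eq_bigr do rewrite hornerXn; have := h x; rewrite negbK.
by rewrite ltnS leqNgt -{2}(prednK n_gt0) ltn_exp2l // ltnSn.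
Qed.

Lemma inP_add s t : inP s -> inP t -> inP (s + t).
Proof. by rewrite /inP => hs ht; have := frobD 1 s t; rewrite expn1 hs ht. Qed.

Section Main.
Variables (r : nat) (a : F).
Hypotheses (r_gt0 : (0 < r)%N) (a0 : a != 0).

Let q := (p ^ r)%N.
Definition Q (x : F) := tr (a * x ^+ (q + 1)).
Definition cc (z : F) := a * z + a ^+ q * z ^+ (q * q).

Lemma Bsym z y : tr (a * (z ^+ q * y)) = tr (y ^+ q * (a ^+ q * z ^+ (q * q))).
Proof.
rewrite -(tr_frobk r (a * (z ^+ q * y))) -/q !exprMn -exprM.
by rewrite [z ^+ _ * _]mulrC mulrCA.
Qed.

Lemma Qsplit z y : Q (z + y) = Q y + (Q z + tr (y ^+ q * cc z)).
Proof.
rewrite /Q /cc !addn1 !exprSr frobD mulrDl !mulrDr !trD.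
rewrite (Bsym z y).
rewrite -/q [a * (y ^+ q * z)]mulrCA.
by rewrite [RHS]addrC -!addrA; congr (_ + _); apply: addrCA.
Qed.

Lemma frobq_inj : injective (fun y : F => y ^+ q).
Proof.
move=> x y /= e; apply/eqP; rewrite -subr_eq0.
have : (x - y) ^+ q == 0 by rewrite frobD frobN e subrr.
by rewrite expf_eq0 => /andP[].
Qed.

Lemma charsum C :
  \sum_(y : F) chi (tr (y ^+ q * C)) = if C == 0 then (p ^ n)%:R else 0.
Proof.
case: eqP => [->|/eqP C0].
  under eq_bigr do rewrite mulr0 tr0 chi0.
  by rewrite sumr_const -cardF; congr (_%:R); apply: eq_card.
have -> : \sum_(y : F) chi (tr (y ^+ q * C)) = \sum_(u : F) chi (tr (u * C)).
  by rewrite [RHS](reindex_inj frobq_inj).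
have [v v0] := tr_nondeg.
pose u0 := v / C.
set S := \sum_(u : F) _.
have eS : S = chi (tr v) * S.
  rewrite {1}/S (reindex_inj (addIr u0)) /= mulr_sumr; apply: eq_bigr => u _.
  by rewrite mulrDl trD /u0 divfK // chiD 1?mulrC //; apply: tr_inP.
have : S * (1 - chi (tr v)) = 0 by rewrite mulrBr mulr1 {1}eS mulrC subrr.
move/eqP; rewrite mulf_eq0 => /orP[/eqP //|]; rewrite subr_eq0 eq_sym.
by rewrite (negbTE (chi_neq1 _ (tr_inP v) v0)).
Qed.

Definition rad := [set z : F | cc z == 0].

Lemma Q_rad z : cc z = 0 -> Q z = 0.
Proof.
move=> cz.
have h : tr (z ^+ q * cc z) = Q z *+ 2.
  rewrite /cc mulrDr trD -Bsym /Q addn1 exprSr mulrCA mulr2n //.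
move: h; rewrite cz mulr0 tr0 -mulr_natr => /esym /eqP.
by rewrite mulf_eq0 (negbTE two_neq0) orbF => /eqP.
Qed.

Lemma walsh0 : `|walsh p n Q 0| ^+ 2 = (p ^ n * #|rad|)%:R.
Proof.
have -> : walsh p n Q 0 = \sum_(x : F) chi (Q x).
  rewrite /walsh; apply: eq_bigr => x _.
  by rewrite mul0r tr0 -/(chi 0) chi0 invr1 mulr1.
have Wc : (\sum_(x : F) chi (Q x))^* = \sum_(x : F) (chi (Q x))^-1.
  by rewrite rmorph_sum; apply: eq_bigr => x _; apply: chi_conj.
rewrite normCK Wc mulr_sumr.
under eq_bigr do rewrite mulr_suml.
have e : forall y : F, \sum_(x : F) chi (Q x) * (chi (Q y))^-1 =
    \sum_(z : F) chi (Q z) * chi (tr (y ^+ q * cc z)).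
  move=> y; rewrite (reindex_inj (addIr y)) /=; apply: eq_bigr => z _.
  rewrite Qsplit chiD; last 2 first.
  - exact: tr_inP.
  - by apply: inP_add; apply: tr_inP.
  rewrite chiD; last 2 first.
  - exact: tr_inP.
  - exact: tr_inP.
  by rewrite mulrC mulKf ?chi_neq0.
under eq_bigr do rewrite e.
rewrite exchange_big /=.
under eq_bigr do rewrite -mulr_sumr charsum.
rewrite (eq_bigr (fun z => if cc z == 0 then (p ^ n)%:R else 0)); last first.
  move=> z _; case: eqP => [cz|_]; last by rewrite mulr0.
  by rewrite Q_rad // chi0 mul1r.
rewrite -big_mkcond sumr_const natrM mulr_natr; congr (_ *+ _).
by apply: eq_card => z; rewrite !inE.
Qed.

Lemma rad_card : #|rad| != p.
Proof.
apply/eqP => cr.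
have qq0 : (q * q)%N != 0%N by rewrite muln_eq0 !expn_eq0 (negbTE (lt0n_neq0 p_gt0)).
have rad0 : (0 : F) \in rad by rewrite inE /cc mulr0 add0r expr0n (negbTE qq0) mulr0.
have : (0 < #|rad :\ (0%R : F)|)%N.
  by move: cr; rewrite (cardsD1 (0 : F)) rad0 add1n => e; move: p_gt1; rewrite -e ltnS.
case/card_gt0P => z0; rewrite !inE => /andP[z00 /eqP cz0].
have az0 : a * z0 = - (a ^+ q * z0 ^+ (q * q)) by apply/eqP; rewrite -addr_eq0 -/(cc z0) cz0.
pose w := a * z0 ^+ (q + 1).
have w0 : w != 0 by rewrite mulf_neq0 // expf_neq0.
have wq : w ^+ q = - w.
  rewrite /w exprMn -exprM mulnDl mul1n exprD mulrA.
  by rewrite addn1 (exprS z0 q) mulrA az0 mulNr opprK.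
have wqq : w ^+ (q * q) = w by rewrite exprM wq frobN wq opprK.
have wnw : w ^+ q != w.
  rewrite wq; apply/eqP => e; move: w0; rewrite -e oppr_eq0 => /negP; apply.
  by move/eqP: e; rewrite eq_sym -addr_eq0 -mulr2n -mulr_natr mulf_eq0 (negbTE two_neq0) orbF.
pose B := [set ((val k)%:R : F) | k : 'I_p].
pose S := w |: B.
have sub : [set s * z0 | s in S] \subset rad.
  apply/subsetP => x /imsetP [s sS ->]; rewrite inE /cc.
  have sqq : s ^+ (q * q) = s.
    case/setU1P: sS => [->|/imsetP[k _ ->]] //.
    by rewrite -expnD frobnat.
  by rewrite exprMn sqq mulrCA [a ^+ q * _]mulrCA -mulrDr -/(cc z0) cz0 mulr0.
have := subset_leq_card sub; rewrite card_imset; last exact: mulIf.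
rewrite cardsU1 card_imset; last exact: natI.
rewrite card_ord cr.
have -> : w \notin B.
  apply/imsetP => -[k _ e]; move: wnw; rewrite e /q frobnat eqxx.
  by [].
by rewrite add1n ltnn.
Qed.

Lemma not_nb : ~ near_bent p n Q.
Proof.
move=> nb; case: (nb 0); rewrite walsh0 => /eqP.
  rewrite pnatr_eq0 muln_eq0 expn_eq0 (negbTE (lt0n_neq0 p_gt0)) /=.
  apply/negP; rewrite -lt0n; apply/card_gt0P; exists 0.
  by rewrite inE /cc mulr0 add0r expr0n muln_eq0 !expn_eq0 (negbTE (lt0n_neq0 p_gt0)) mulr0.
rewrite eqr_nat expnSr eqn_pmul2l ?expn_gt0 ?p_gt0 //.
exact/negP/rad_card.
Qed.
End Main.
End FF.

Theorem theorem3 (p r n : nat) (F : finFieldType) (a : F) :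
  prime p -> odd p -> (0 < r)%N -> (0 < n)%N -> #|F| = (p ^ n)%N -> a != 0 ->
  ~ near_bent p n (fun x : F => tr p n (a * x ^+ (p ^ r + 1))).
Proof.
move=> pr oddp r0 n0 cF a0.
exact: (@not_nb p n F pr oddp n0 cF r a a0).
Qed.
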